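(* Let $p$ be a prime and $1\le k\le\nu$ integers, and assume that $p$ is odd, or that $p=2$ and $k\ge 2$. Let $\Omega_p^{k,\nu}:=\ker\big((\mathbb{Z}/p^\nu\mathbb{Z})^\times\to(\mathbb{Z}/p^k\mathbb{Z})^\times\big)=\{1+\beta p^k:\beta\in\mathbb{Z}/p^\nu\mathbb{Z}\}$, acting on $\mathbb{Z}/p^\nu\mathbb{Z}$ by multiplication. Then $$H^1(\Omega_p^{k,\nu},\mathbb{Z}/p^\nu\mathbb{Z})=0=H^2(\Omega_p^{k,\nu},\mathbb{Z}/p^\nu\mathbb{Z}).$$
   Context: Group cohomology of the finite group $\Omega_p^{k,\nu}$. *)

(* Defs.v *)
From mathcomp Require Import all_boot all_order all_algebra.
Set Implicit Arguments. Unset Strict Implicit. Unset Printing Implicit Defensive.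
Import GRing.Theory.
Local Open Scope ring_scope.

Definition Omega (p k nu : nat) : {set 'Z_(p ^ nu)} :=
  [set x : 'Z_(p ^ nu) | [exists b : 'Z_(p ^ nu), x == 1 + b * (p ^ k)%:R]].

(* A (multiplicative) group G contained in a commutative ring R, acting on the
   additive group of R by multiplication.  Cochains are functions on G
   (values outside G are irrelevant). *)

Definition cocycle1 (R : comNzRingType) (G : {pred R}) (f : R -> R) : Prop :=
  forall g h, g \in G -> h \in G -> f (g * h) = f g + g * f h.
Definition coboundary1 (R : comNzRingType) (G : {pred R}) (f : R -> R) : Prop :=
  exists m : R, forall g, g \in G -> f g = g * m - m.
Definition cocycle2 (R : comNzRingType) (G : {pred R}) (f : R -> R -> R) : Prop :=
  forall g h l, g \in G -> h \in G -> l \in G ->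
    g * f h l - f (g * h) l + f g (h * l) - f g h = 0.
Definition coboundary2 (R : comNzRingType) (G : {pred R}) (f : R -> R -> R) : Prop :=
  exists c : R -> R, forall g h, g \in G -> h \in G ->
    f g h = g * c h - c (g * h) + c g.

Definition H1_trivial (R : comNzRingType) (G : {pred R}) : Prop :=
  forall f, cocycle1 G f -> coboundary1 G f.
Definition H2_trivial (R : comNzRingType) (G : {pred R}) : Prop :=
  forall f, cocycle2 G f -> coboundary2 G f.

(* Main.v *)
Require Import Defs.
From mathcomp Require Import all_boot all_order all_algebra.
From mathcomp Require Import zify ring.
Import GRing.Theory.

Lemma geo a L : exists r1 r2, (1+a)^L = 1 + L*a + a^2*r1 /\
  \sum_(i<L) (1+a)^i = L + 'C(L,2)*a + a^2*r2.
Proof.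
elim: L => [|L [r1 [r2 [H1 H2]]]]; first by exists 0, 0; rewrite big_ord0 /= !muln0 !addn0.
exists (r1 + L + a*r1), (r2 + r1); split.
  by rewrite expnS H1; ring.
rewrite big_ord_recr /= H2 H1 binS bin1; ring.
Qed.

Lemma step_sum p m u : prime p -> 0 < m -> (odd p || (1 < m)) ->
  exists w, \sum_(i<p) (1+p^m*u)^i = p*w /\ coprime w p.
Proof.
move=> pp m0 hm.
have [r1 [r2 [_ H]]] := geo (p^m*u) p.
have hd : p^2 %| 'C(p,2)*(p^m*u) + (p^m*u)^2*r2.
  apply: dvdn_add.
    case: (ltnP 1 m) => hm1.
      by apply: dvdn_mull; apply: dvdn_mulr; apply: dvdn_exp2l.
    have om : m = 1 by lia.
    have op : odd p by move: hm; rewrite ltnNge hm1 orbF.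
    have p2 : 2 < p.
      have := prime_gt1 pp; move: op; clear; case: p => [|[|[|]]] //.
    rewrite om expn1 mulnA expnS expn1 dvdn_mulr // dvdn_mul //.
    by apply: prime_dvd_bin => //; rewrite p2.
  by rewrite expnMn -expnM dvdn_mulr // dvdn_mulr // dvdn_exp2l //; lia.
case/dvdnP: hd => z hz.
exists (1 + p*z); split.
  by rewrite H -addnA hz; ring.
rewrite /coprime gcdnC addnC mulnC gcdnMDl gcdn1 //.
Qed.

Lemma core p k j : prime p -> 0 < k -> (odd p || (1 < k)) ->
  exists u, (1+p^k)^(p^j) = 1 + p^(k+j)*u /\ coprime u p.
Proof.
move=> pp k0 hk; elim: j => [|j [u [Hu cu]]].
  by exists 1; rewrite addn0 muln1 expn0 expn1 /coprime gcd1n.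
have hm : odd p || (1 < k + j) by case/orP: hk => h; apply/orP; [left|right]; lia.
have kj : 0 < k + j by lia.
have [w [Hw cw]] := step_sum p (k+j) u pp kj hm.
exists (u*w); split; last by rewrite coprimeMl cu cw.
have := predn_exp (1 + p^(k+j)*u) p.
rewrite expnSr expnM Hu /= => E.
rewrite -[LHS]prednK ?expn_gt0 ?addn_gt0 // E Hw addnS expnS; ring.
Qed.

Local Open Scope ring_scope.
Lemma natZ0 (P m : nat) : (1 < P)%N -> ((m%:R : 'Z_P) = 0) <-> (P %| m)%N.
Proof.
move=> P1; split.
  move/(congr1 (@nat_of_ord _)); rewrite val_Zp_nat //= => h; exact/eqP.
move=> /eqP h; apply: val_inj; rewrite /= val_Zp_nat //.
Qed.

Lemma annZ (p nu a : nat) (z : 'Z_(p ^ nu)) : (1 < p)%N -> (0 < nu)%N -> (a <= nu)%N ->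
  (p ^ a)%:R * z = 0 -> exists w, z = (p ^ (nu - a))%:R * w.
Proof.
move=> p1 nu0 anu; have P1 : (1 < p ^ nu)%N by rewrite -{1}(expn0 p) ltn_exp2l.
rewrite -[z]natr_Zp -natrM => /natZ0 => /(_ P1).
rewrite -{1}(subnKC anu) expnD dvdn_pmul2l ?expn_gt0 ?(ltnW p1) //.
case/dvdnP => t ->; exists t%:R; by rewrite natrM mulrC.
Qed.

Lemma solve0 (R : comNzRingType) (a b c d : R) : a - b + c - d = 0 -> a = b - c + d.
Proof. move=> h; rewrite -[a]subr0 -h; ring. Qed.

Theorem lemma2p4 (p k nu : nat) :
  prime p -> (1 <= k)%N -> (k <= nu)%N -> (odd p \/ (p = 2 /\ (2 <= k)%N)) ->
  H1_trivial (mem (Omega p k nu)) /\ H2_trivial (mem (Omega p k nu)).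
Proof.
move=> pp k1 knu hpk.
have p1 : (1 < p)%N := prime_gt1 pp.
have nu0 : (0 < nu)%N by lia.
have P1 : (1 < p ^ nu)%N by rewrite -{1}(expn0 p) ltn_exp2l.
have hk : odd p || (1 < k)%N by case: hpk => [->|[_ h]] //; rewrite h orbT.
have k0 : (0 < k)%N by lia.
have [q qE] : {q : 'Z_(p ^ nu) | q = (p ^ k)%:R} by exists (p ^ k)%:R.
have [s sE] : {s : 'Z_(p ^ nu) | s = 1 + q} by exists (1 + q).
have s1 : s - 1 = q by rewrite sE addrAC subrr add0r.
set n := (p ^ (nu - k))%N.
have n0 : (0 < n)%N by rewrite expn_gt0 (ltnW p1).
have npk : (n * p ^ k = p ^ nu)%N by rewrite -expnD subnK.
have hN : forall j, exists2 U : 'Z_(p ^ nu), U \is a GRing.unit &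
    \sum_(i < p ^ j) s ^+ i = (p ^ j)%:R * U.
  move=> j; have [u [Hu cu]] := core p k j pp k0 hk.
  have := predn_exp (1 + p ^ k) (p ^ j); rewrite Hu !add1n /= expnD -mulnA.
  move/eqP; rewrite eqn_pmul2l ?expn_gt0 ?(ltnW p1) // => /eqP E.
  exists u%:R.
    by rewrite unitZpE // coprimeXl // coprime_sym.
  rewrite -natrM E natr_sum; apply: eq_bigr => i _.
  by rewrite natrX -[(p ^ k).+1]add1n natrD sE qE.
have sn : s ^+ n = 1.
  apply/eqP; rewrite -subr_eq0 subrX1 s1; have [U _ ->] := hN (nu - k)%N.
  by rewrite mulrA qE -natrM mulnC npk pchar_Zp // mul0r.
have sne : forall e, (e < nu - k)%N -> s ^+ (p ^ e) != 1.
  move=> e lte; apply/negP => /eqP he.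
  have := subrX1 s (p ^ e); rewrite he subrr s1; have [U uU ->] := hN e.
  rewrite mulrA qE -natrM => /esym h0.
  have : (p ^ (k + e))%:R = 0 :> 'Z_(p ^ nu).
    by rewrite expnD -(mulrK uU (_%:R)) h0 mul0r.
  move/(natZ0 _ _ P1); rewrite dvdn_Pexp2l //; lia.
have sinv : forall i, (i <= n)%N -> s ^+ (n - i) * s ^+ i = 1.
  by move=> i hi; rewrite -exprD subnK.
have inj : forall i j, (i < n)%N -> (j < n)%N -> s ^+ i = s ^+ j -> i = j.
  suff H : forall i j, (i <= j)%N -> (j < n)%N -> s ^+ i = s ^+ j -> i = j.
    move=> i j hi hj e; case: (leqP i j) => h; first exact: H.
    by apply/esym/H => //; apply: ltnW.
  move=> i j hij hj e.
  have sd : s ^+ (j - i) = 1.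
    have ej : s ^+ j = s ^+ i * s ^+ (j - i) by rewrite -exprD subnKC.
    have := congr1 (fun x => s ^+ (n - i) * x) e.
    rewrite ej mulrA sinv ?mul1r //; last by lia.
  case: (posnP (j - i)) => d0; first by lia.
  have [a _ hb] := Bezoutl n d0.
  have sg : s ^+ (gcdn (j - i) n) = 1.
    have -> : s ^+ (gcdn (j - i) n) = s ^+ (gcdn (j - i) n + a * n).
      by rewrite exprD mulnC exprM sn expr1n mulr1.
    case/dvdnP: hb => t ->; by rewrite mulnC exprM sd expr1n.
  have : (gcdn (j - i) n %| p ^ (nu - k))%N by apply: dvdn_gcdr.
  case/(dvdn_pfactor _ _ pp) => e0 he ge.
  have : (gcdn (j - i) n <= j - i)%N by apply: dvdn_leq => //; apply: dvdn_gcdl.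
  rewrite ge => le1.
  have : (p ^ e0 < p ^ (nu - k))%N by lia.
  rewrite ltn_exp2l // => lt2.
  by move: (sne e0 lt2); rewrite -ge sg eqxx.
have memS : forall m, s ^+ m \in mem (Omega p k nu).
  elim=> [|m].
    by rewrite expr0 inE; apply/existsP; exists 0; rewrite mul0r addr0.
  rewrite !inE => /existsP [b /eqP hb]; apply/existsP; exists (b + 1 + b * q).
  by rewrite exprSr hb sE qE; apply/eqP; ring.
have gen : forall g, g \in mem (Omega p k nu) -> exists2 i, (i < n)%N & g = s ^+ i.
  move=> g Gg.
  pose S := [set s ^+ (nat_of_ord i) | i : 'I_n].
  have cS : #|S| = n.
    rewrite card_imset ?card_ord // => i j /inj h; apply: val_inj; exact: h.
  have SO : S \subset Omega p k nu.
    by apply/subsetP => x /imsetP [i _ ->]; exact: memS.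
  have OT : Omega p k nu \subset [set 1 + (nat_of_ord b)%:R * q | b : 'I_n].
    apply/subsetP => x; rewrite inE => /existsP [b /eqP ->]; apply/imsetP.
    have lt : (b %% n < n)%N := ltn_pmod _ n0.
    exists (Ordinal lt) => //=; rewrite qE; congr (_ + _).
    rewrite -{1}[b]natr_Zp (divn_eq b n) natrD natrM mulrDl -mulrA -natrM npk.
    by rewrite pchar_Zp // mulr0 add0r modnMDl modn_mod.
  have cO : (#|Omega p k nu| <= n)%N.
    apply: leq_trans (subset_leq_card OT) _.
    by apply: leq_trans (leq_imset_card _ _) _; rewrite card_ord.
  have ecard : #|S| = #|Omega p k nu|.
    by apply/eqP; rewrite eqn_leq subset_leq_card // cS cO.
  have eqSO := elimT (subset_cardP ecard) SO.
  have : g \in S by rewrite eqSO.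
  by case/imsetP => i _ ->; exists i.
have G1 : 1 \in mem (Omega p k nu) by rewrite -(expr0 s).
have Gs : s \in mem (Omega p k nu) by rewrite -(expr1 s).
have [U uU hNU] := hN (nu - k)%N.
have powmod : forall m, s ^+ m = s ^+ (m %% n).
  by move=> m; rewrite {1}(divn_eq m n) exprD mulnC exprM sn expr1n mul1r.
have sumq : forall i, s ^+ i - 1 = q * \sum_(l < i) s ^+ l by move=> i; rewrite subrX1 s1.
split.
  move=> f cf.
  have f1 : f 1 = 0.
    have h := cf 1 1 G1 G1; rewrite mulr1 mul1r in h.
    by have := congr1 (fun x => x - f 1) h; rewrite subrr addrK.
  have fpow : forall i, f (s ^+ i) = (\sum_(l < i) s ^+ l) * f s.
    elim=> [|i IH]; first by rewrite big_ord0 mul0r expr0 f1.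
    by rewrite exprSr cf ?memS // IH big_ord_recr /= mulrDl.
  have Nf : (p ^ (nu - k))%:R * (U * f s) = 0.
    by rewrite mulrA -hNU -fpow sn f1.
  have [w hw] := annZ _ _ _ _ p1 nu0 (leq_subr k nu) Nf.
  rewrite subKn // -qE in hw.
  exists (U^-1 * w) => g /gen [i _ ->].
  rewrite fpow -(mulKr uU (f s)) hw.
  have -> : s ^+ i = 1 + q * \sum_(l < i) s ^+ l by rewrite -sumq addrC subrK.
  ring.
move=> f cf.
pose F := fun i => f (s ^+ i) s.
pose H := fun i => f s (s ^+ i).
pose T := \sum_(i < n) F i.
have sT : s * T = T.
  have eachE : forall i, s * F i = F i.+1 - (H i.+1 - H i).
    move=> i; rewrite opprB addrA addrAC; apply: solve0.
    by have := cf s (s ^+ i) s Gs (memS i) Gs; rewrite -exprS -exprSr.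
  rewrite mulr_sumr (eq_bigr (fun i : 'I_n => F i.+1 - (H i.+1 - H i)) (fun i _ => eachE i)) sumrB.
  have e1 : \sum_(i < n.+1) F i = F 0%N + \sum_(i < n) F i.+1.
    by rewrite big_ord_recl.
  have e2 : \sum_(i < n.+1) F i = T + F n by rewrite big_ord_recr.
  have Fn : F n = F 0%N by rewrite /F sn expr0.
  have -> : \sum_(i < n) F i.+1 = T.
    by apply: (@addrI _ (F 0%N)); rewrite -e1 e2 Fn addrC.
  rewrite -(big_mkord xpredT (fun i => H i.+1 - H i)) telescope_sumr //.
  by rewrite /H sn expr0 subrr subr0.
have qT : q * T = 0 by rewrite -s1 mulrBl sT mul1r subrr.
rewrite qE in qT.
have [w hw] := annZ _ _ _ _ p1 nu0 knu qT.
pose a0 := U^-1 * w.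
have NA : \sum_(i < n) s ^+ i * a0 = T.
  by rewrite -mulr_suml hNU /a0 mulrA mulrK // hw.
pose C := fun i : nat => f 1 1 + \sum_(l < i) (s ^+ l * a0 - F l).
have CS : forall i, C i.+1 = C i + (s ^+ i * a0 - F i).
  by move=> i; rewrite /C big_ord_recr /= addrA.
have C0 : C 0%N = f 1 1 by rewrite /C big_ord0 addr0.
have Cn : C n = f 1 1 by rewrite /C sumrB NA subrr addr0.
pose idx := fun x : 'Z_(p ^ nu) =>
  if [pick i : 'I_n | s ^+ i == x] is Some i then nat_of_ord i else 0%N.
have idxE : forall i, (i < n)%N -> idx (s ^+ i) = i.
  move=> i lt; rewrite /idx; case: pickP => [j /eqP hj | h].
    exact: inj (ltn_ord j) lt hj.
  by have := h (Ordinal lt); rewrite /= eqxx.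
pose c := fun x => C (idx x).
have cE : forall i, (i <= n)%N -> c (s ^+ i) = C i.
  move=> i; rewrite leq_eqVlt => /orP [/eqP -> | lt]; last by rewrite /c idxE.
  by rewrite /c sn -(expr0 s) idxE // C0 Cn.
have f11s : f 1 s = f 1 1.
  have := cf 1 1 s G1 G1 Gs; rewrite !mul1r subrr add0r => /eqP.
  by rewrite subr_eq0 => /eqP.
pose f' := fun g h => f g h - (g * c h - c (g * h) + c g).
have A : forall m, f' (s ^+ m) s = 0.
  move=> m; rewrite /f' powmod.
  have lt : (m %% n < n)%N := ltn_pmod _ n0.
  move: lt; set i := (m %% n)%N => lt.
  have cs : c s = C 1%N by rewrite -(cE 1%N n0) expr1.
  rewrite -exprSr cs (cE i.+1 lt) (cE i (ltnW lt)) CS CS C0 /F expr0 f11s mul1r.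
  ring.
have cf' : forall g h l, g \in mem (Omega p k nu) -> h \in mem (Omega p k nu) ->
    l \in mem (Omega p k nu) ->
    g * f' h l - f' (g * h) l + f' g (h * l) - f' g h = 0.
  move=> g h l Gg Gh Gl; have := cf g h l Gg Gh Gl; rewrite /f' !mulrA => e.
  rewrite -e; ring.
exists c => g h Gg Gh.
case/gen: Gg => i _ ->; case/gen: Gh => j _ ->.
suff : f' (s ^+ i) (s ^+ j) = 0 by rewrite /f' => /eqP; rewrite subr_eq0 => /eqP.
have stepj : forall i0 j0, f' (s ^+ i0) (s ^+ j0.+1) = f' (s ^+ i0) (s ^+ j0).
  move=> i0 j0; have := cf' (s ^+ i0) (s ^+ j0) s (memS _) (memS _) Gs.
  rewrite -exprSr -exprD !A mulr0 subrr add0r => /eqP.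
  by rewrite subr_eq0 => /eqP.
have f'11 : f' 1 1 = 0.
  by have := stepj 0%N 0%N; rewrite expr1 A expr0 => <-.
have base : forall i0, f' (s ^+ i0) 1 = 0.
  move=> i0; have := cf' (s ^+ i0) 1 1 (memS _) G1 G1.
  rewrite !mulr1 f'11 mulr0 sub0r addNr sub0r => /eqP.
  by rewrite oppr_eq0 => /eqP.
elim: j => [|j IH]; first by rewrite expr0 base.
by rewrite stepj.
Qed.
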